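(* Let $\Omega$ be a Stone signature, $X$ a topological space, and let $\hat\iota:T_\Omega(X)\to\overline{\Omega}_X\mathcal{S}t_\Omega$ be the unique continuous homomorphism extending the natural generating mapping $\iota:X\to\overline{\Omega}_X\mathcal{S}t_\Omega$. Then $\mathcal B=\{\hat\iota^{-1}(K):K\text{ clopen in }\overline{\Omega}_X\mathcal{S}t_\Omega\}$ is the largest Boolean subalgebra of $\mathcal P_{co}(T_\Omega(X))$ satisfying condition $(\ast)$.
   Context: A Stone signature is $\Omega=\biguplus_n\Omega_n$ with each $\Omega_n$ a compact Hausdorff 0-dimensional space. A Stone topological $\Omega$-algebra is a compact Hausdorff 0-dimensional space $A$ with continuous evaluation maps $\Omega_n\times A^n\to A$; $\mathcal{S}t_\Omega$ is the class of all such. $\overline{\Omega}_X\mathcal{S}t_\Omega$ is the free Stone topological algebra over $X$: a Stone topological algebra with a continuous map $\iota$ from $X$ whose image generates a dense subalgebra, such that every continuous map from $X$ into a Stone topological $\Omega$-algebra factors uniquely through $\iota$ via a continuous homomorphism. $T_\Omega(X)$ is the term algebra on $X$ (finite ordered trees, leaves labeled in $X\uplus\Omega_0$, nodes with $k$ children labeled in $\Omega_k$), topologized as topological sum over tree shapes of products of label spaces, with evaluation maps $E_n:\Omega_n\times T_\Omega(X)^n\to T_\Omega(X)$. $\mathcal P_{co}(Y)$ is the Boolean algebra of clopen subsets of $Y$. Condition $(\ast)$ for a Boolean algebra $\mathcal B$ of subsets of $T_\Omega(X)$: for every $n$ and every $L\in\mathcal B$, $E_n^{-1}(L)$ lies in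 the Boolean subalgebra of subsets of $\Omega_n\times T_\Omega(X)^n$ generated by the sets $K\times L_1\times\cdots\times L_n$ with $K$ clopen in $\Omega_n$ and $L_i\in\mathcal B$. *)

(* Defs.v *)
From HB Require Import structures.
From mathcomp Require Import all_boot all_order all_algebra.
From mathcomp Require Import all_classical all_reals all_analysis.

Set Implicit Arguments.
Unset Strict Implicit.
Unset Printing Implicit Defensive.

Local Open Scope classical_set_scope.

Definition zero_dim (T : topologicalType) : Prop :=
  forall (x : T) (U : set T), nbhs x U ->
    exists V : set T, [/\ clopen V, V x & V `<=` U].

Definition stone_space (T : topologicalType) : Prop :=
  [/\ compact [set: T], hausdorff_space T & zero_dim T].

(* A Stone signature Omega = disjoint union of the Omega n, each Omega n a
   Stone space; it is represented by the family (Omega n)_n. *)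
Definition stone_signature (Omega : nat -> topologicalType) : Prop :=
  forall n, stone_space (Omega n).

Definition op_type (Omega : nat -> topologicalType) (A : Type) :=
  forall n, Omega n -> ('I_n -> A) -> A.

Definition stone_alg (Omega : nat -> topologicalType) (A : topologicalType)
    (ev : op_type Omega A) : Prop :=
  stone_space A /\
  forall n, continuous (fun p : (Omega n * {ptws 'I_n -> A})%type =>
                          ev n p.1 p.2).

Definition is_hom (Omega : nat -> topologicalType) (A B : Type)
    (evA : op_type Omega A) (evB : op_type Omega B) (h : A -> B) : Prop :=
  forall n (o : Omega n) (a : 'I_n -> A), h (evA n o a) = evB n o (h \o a).

Definition subalg_gen (Omega : nat -> topologicalType) (A : Type)
    (ev : op_type Omega A) (S : set A) : set A :=
  fun a => forall C : set A,
    S `<=` C ->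
    (forall n (o : Omega n) (c : 'I_n -> A), (forall i, C (c i)) -> C (ev n o c)) ->
    C a.

Definition is_free_stone_alg (Omega : nat -> topologicalType)
    (X : topologicalType) (F : topologicalType) (evF : op_type Omega F)
    (iota : X -> F) : Prop :=
  [/\ stone_alg evF,
      continuous iota,
      closure (subalg_gen evF (range iota)) = [set: F] &
      forall (B : topologicalType) (evB : op_type Omega B),
        stone_alg evB ->
        forall f : X -> B, continuous f ->
          exists! g : F -> B,
            [/\ continuous g, is_hom evF evB g & forall x, g (iota x) = f x]].

(* The term algebra T_Omega(X): finite ordered trees; leaves labelled in X
   (Var) or in Omega 0 (Op 0 o _), nodes with k children labelled in Omega k. *)
Inductive term (Omega : nat -> topologicalType) (X : Type) : Type :=
  | Var of X
  | Op (n : nat) of Omega n & ('I_n -> term Omega X).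

Arguments Var {Omega X}.
Arguments Op {Omega X} n.

Definition term_ev (Omega : nat -> topologicalType) (X : Type)
  : op_type Omega (term Omega X) := fun n o ts => Op n o ts.

(* Topology of T_Omega(X): the topological sum, over tree shapes, of the
   products of the label spaces. *)
Fixpoint term_box (Omega : nat -> topologicalType) (X : topologicalType)
    (t : term Omega X) : set (set (term Omega X)) :=
  match t with
  | Var x => fun N => exists V : set X,
      [/\ open V, V x & N = [set s | exists2 y, V y & s = Var y]]
  | Op n o f => fun N => exists (W : set (Omega n)) (Bs : 'I_n -> set (term Omega X)),
      [/\ open W, W o, (forall i, term_box (f i) (Bs i)) &
          N = [set s | exists o' g, [/\ s = Op n o' g, W o' & forall i, Bs i (g i)]]]
  end.

Definition term_open (Omega : nat -> topologicalType) (X : topologicalType)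
    (U : set (term Omega X)) : Prop :=
  forall t, U t -> exists2 N, term_box t N & N `<=` U.

Definition term_clopen (Omega : nat -> topologicalType) (X : topologicalType)
    (U : set (term Omega X)) : Prop :=
  term_open U /\ term_open (~` U).

Fixpoint term_eval (Omega : nat -> topologicalType) (X A : Type)
    (ev : op_type Omega A) (f : X -> A) (t : term Omega X) : A :=
  match t with
  | Var x => f x
  | Op n o ts => ev n o (fun i => term_eval ev f (ts i))
  end.

Definition is_bool_alg (T : Type) (B : set (set T)) : Prop :=
  [/\ B [set: T],
      (forall S, B S -> B (~` S)) &
      (forall S S', B S -> B S' -> B (S `|` S'))].

Definition bool_gen (T : Type) (G : set (set T)) : set (set T) :=
  fun S => forall C : set (set T), is_bool_alg C -> G `<=` C -> C S.

Definition clopen_bool_subalg (Omega : nat -> topologicalType) (X : topologicalType)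
    (B : set (set (term Omega X))) : Prop :=
  is_bool_alg B /\ B `<=` @term_clopen Omega X.

Definition cond_star (Omega : nat -> topologicalType) (X : topologicalType)
    (B : set (set (term Omega X))) : Prop :=
  forall n (L : set (term Omega X)), B L ->
    bool_gen
      [set R | exists (K : set (Omega n)) (Ls : 'I_n -> set (term Omega X)),
          [/\ clopen K, (forall i, B (Ls i)) &
              R = [set p | K p.1 /\ forall i, Ls i (p.2 i)]]]
      ((fun p : Omega n * ('I_n -> term Omega X) => term_ev p.1 p.2) @^-1` L).

(* Main.v *)
Require Import Defs.
From HB Require Import structures.
From mathcomp Require Import all_boot all_order all_algebra.
From mathcomp Require Import all_classical all_reals all_analysis.
From mathcomp Require Import finmap.
Set Implicit Arguments.
Unset Strict Implicit.
Unset Printing Implicit Defensive.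
Local Open Scope classical_set_scope.

Lemma ptws_cvg_coord (I : Type) (A : topologicalType) (F : set_system (I -> A))
  (g : I -> A) : Filter F -> (forall i, (fun h => h i) @ F --> g i) ->
  F --> (g : {ptws I -> A}).
Proof.
move=> FF H; apply/cvg_sup => i Q.
rewrite nbhsE => -[B [oB Bg] BQ].
case: oB Bg BQ => C oC <- Cg BQ.
apply: (filterS BQ); apply: (H i); exact: open_nbhs_nbhs.
Qed.

Lemma ptws_fin_nbhs n (A : topologicalType) (g : {ptws 'I_n -> A}) (Q : set {ptws 'I_n -> A}) :
  nbhs g Q -> exists U : 'I_n -> set A,
    (forall i, nbhs (g i) (U i)) /\ (forall h, (forall i, U i (h i)) -> Q h).
Proof.
pose PF := filter_from [set U : 'I_n -> set A | forall i, nbhs (g i) (U i)]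
  (fun U => [set h : 'I_n -> A | forall i, U i (h i)]).
have FPF : Filter PF.
  apply: filter_from_filter; first by exists (fun _ => setT) => i; exact: filterT.
  move=> U V HU HV; exists (fun i => U i `&` V i).
    by move=> i; apply: filterI.
  by move=> h /= H; split => i; case: (H i).
have : PF --> (g : {ptws 'I_n -> A}).
  apply: ptws_cvg_coord => i C Ci.
  exists (fun j => if j == i then C else setT).
    by move=> j; case: eqP => [->|_] //; exact: filterT.
  by move=> h /= /(_ i); rewrite eqxx.
move=> /(_ Q) H nQ; have [U HU HUQ] := H nQ.
by exists U; split => // h Hh; apply: HUQ.
Qed.

Definition lc (Y : topologicalType) (h : Y -> bool) :=
  forall y, nbhs y [set z | h z = h y].

Lemma lc_cont (Y : topologicalType) (h : Y -> bool) : lc h -> continuous h.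
Proof.
move=> H y Q /= nQ; have Qh := nbhs_singleton nQ.
by apply: filterS (H y) => z /= ->.
Qed.

Lemma cont_lc (Y : topologicalType) (h : Y -> bool) : continuous h -> lc h.
Proof.
move=> H y; apply: (H y [set h y]); apply: open_nbhs_nbhs; split => //.
exact: discrete_open.
Qed.

Lemma lc_clopen (Y : topologicalType) (U : set Y) : clopen U -> lc (fun y => `[< U y >]).
Proof.
case=> oU cU y; have [Uy|nUy] := pselect (U y).
  apply: (@filterS _ _ _ U); last by apply: open_nbhs_nbhs.
  by move=> z Uz /=; rewrite !asboolT.
apply: (@filterS _ _ _ (~` U)); last first.
  by apply: open_nbhs_nbhs; split => //; exact: closed_openC.
by move=> z Uz /=; rewrite !asboolF.
Qed.

Lemma lc_cst (Y : topologicalType) (b : bool) : lc (fun _ : Y => b).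
Proof. by move=> y; apply: nearW. Qed.

Lemma lc_neg (Y : topologicalType) (h : Y -> bool) : lc h -> lc (fun y => ~~ h y).
Proof. by move=> H y; apply: filterS (H y) => z /= ->. Qed.

Lemma lc_or (Y : topologicalType) (h h' : Y -> bool) : lc h -> lc h' -> lc (fun y => h y || h' y).
Proof.
move=> H H' y; apply: filterS (filterI (H y) (H' y)) => z [/= -> ->] //.
Qed.

Lemma lc_and (Y : topologicalType) (h h' : Y -> bool) : lc h -> lc h' -> lc (fun y => h y && h' y).
Proof.
move=> H H' y; apply: filterS (filterI (H y) (H' y)) => z [/= -> ->] //.
Qed.

Lemma lc_forall (Y : topologicalType) (I : finType) (h : I -> Y -> bool) :
  (forall i, lc (h i)) -> lc (fun y => [forall i, h i y]).
Proof.
move=> H y.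
have Hn : \forall z \near y, forall i, h i z = h i y.
  by apply: filter_forall => i; exact: (H i y).
apply: filterS Hn => z /= Hz.
by apply: eq_forallb => i; rewrite Hz.
Qed.

Lemma lc_comp (Y Z : topologicalType) (g : Y -> Z) (h : Z -> bool) :
  continuous g -> lc h -> lc (h \o g).
Proof. by move=> cg H y; apply: (cg y [set z | h z = h (g y)]); apply: H. Qed.

Section PStone.
Variable I : Type.
Definition PS := {ptws set I -> bool}.

Lemma PS_compact : compact [set: PS].
Proof.
have := @tychonoff _ (fun _ : set I => bool) _ (fun=> bool_compact).
by congr (compact _); rewrite eqEsubset.
Qed.

Lemma PS_hausdorff : hausdorff_space PS.
Proof. by apply: hausdorff_product => ?; apply: discrete_hausdorff. Qed.

Lemma PS_zero_dimensional : zero_dimensional PS.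
Proof. by apply: zero_dimension_prod => _; apply: discrete_zero_dimension. Qed.

Lemma stone_zd (T : topologicalType) : compact [set: T] -> hausdorff_space T ->
  zero_dimensional T -> zero_dim T.
Proof.
move=> cT hT zT x U nU.
have := zero_dimensional_cvg hT zT cT nU.
by case=> D [Dx cD] DU; exists D; split.
Qed.

Lemma PS_stone : stone_space PS.
Proof.
split; [exact: PS_compact|exact: PS_hausdorff|].
apply: stone_zd; [exact: PS_compact|exact: PS_hausdorff|exact: PS_zero_dimensional].
Qed.

Lemma PS_proj_cont (L : set I) : continuous (fun u : PS => u L).
Proof. exact: (@proj_continuous _ (fun _ : set I => bool) L). Qed.

Lemma PS_cont (Y : topologicalType) (m : Y -> PS) :
  (forall L, lc (fun y => m y L)) -> continuous m.
Proof.
move=> H y; apply: ptws_cvg_coord => L.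
exact: (lc_cont (H L)).
Qed.
End PStone.

Lemma bool_gen_alg (T : Type) (G : set (set T)) : is_bool_alg (bool_gen G).
Proof.
split.
- by move=> C [].
- by move=> S HS C HC HG; case: (HC) => _ Hc _; apply: Hc; apply: HS.
- by move=> S S' HS HS' C HC HG; case: (HC) => _ _ Hu; apply: Hu; [apply: HS|apply: HS'].
Qed.

Lemma bool_gen_sub (T : Type) (G : set (set T)) : G `<=` bool_gen G.
Proof. by move=> S GS C _; apply. Qed.

Lemma bool_alg0 (T : Type) (C : set (set T)) : is_bool_alg C -> C set0.
Proof. by case=> HT Hc _; rewrite -setCT; apply: Hc. Qed.

Lemma bool_gen_fin (T : Type) (I : eqType) (G : set (set T)) (good : I -> Prop)
  (R : I -> set T) : (forall i, good i -> G (R i)) ->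
  forall s : seq I, bool_gen G [set p | exists i, [/\ i \in s, good i & R i p]].
Proof.
move=> HR; elim=> [|i s IH].
  rewrite (_ : [set p | _] = set0); first exact: bool_alg0 (bool_gen_alg G).
  by apply/seteqP; split => p //=; case=> j [].
have [gi|ngi] := pselect (good i).
  rewrite (_ : [set p | _] = R i `|` [set p | exists j, [/\ j \in s, good j & R j p]]).
    case: (bool_gen_alg G) => _ _ Hu; apply: Hu; [exact: bool_gen_sub (HR _ gi)| exact: IH].
  apply/seteqP; split => p.
    move=> [j []]; rewrite inE => /orP[/eqP ->|js] gj Rj; [by left|by right; exists j].
  case=> [Rp|[j [js gj Rj]]]; first by exists i; rewrite inE eqxx.
  by exists j; rewrite inE js orbT.
rewrite (_ : [set p | _] = [set p | exists j, [/\ j \in s, good j & R j p]]) //.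
apply/seteqP; split => p.
  move=> [j []]; rewrite inE => /orP[/eqP ->|js] gj Rj //; by exists j.
by case=> j [js gj Rj]; exists j; rewrite inE js orbT.
Qed.

Section PointedCopy.
Variables (T : topologicalType) (t0 : T).
Definition pcopy : Type := let _ := t0 in T.
HB.instance Definition _ := Topological.on pcopy.
HB.instance Definition _ := isPointed.Build pcopy t0.
End PointedCopy.

Lemma compact_cover_np (T : topologicalType) (A : set T) : compact A -> cover_compact A.
Proof.
move=> cA I D f fo cov.
have [[t0 _]|nT] := pselect (exists t : T, True); last first.
  exists fset0 => // t; exfalso; apply: nT; by exists t.
have := (@compact_cover (@pcopy T t0)); move=> /(congr1 (fun P => P A)) H.
have cA' : @compact (@pcopy T t0) A by [].
rewrite H in cA'; exact: (cA' I D f fo cov).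
Qed.

Lemma nbhs_forall_fin (Y : topologicalType) n (P : 'I_n -> Y -> Prop) (y : Y) :
  (forall i, nbhs y (P i)) -> nbhs y (fun z => forall i, P i z).
Proof. by move=> H; apply: filter_forall => i; exact: H. Qed.

Unset Implicit Arguments.
Section Main.
Variables (Omega : nat -> topologicalType) (X : topologicalType)
    (F : topologicalType) (evF : op_type Omega F) (iota : X -> F).
Hypothesis hOm : stone_signature Omega.
Hypothesis hev : stone_alg evF.
Hypothesis ciota : continuous iota.
Hypothesis hF : is_free_stone_alg evF iota.

Local Notation T := (term Omega X).
Local Notation E := (term_eval evF iota).

Lemma eval_box (t : T) (U : set F) : nbhs (E t) U ->
  exists2 N, term_box t N & N `<=` E @^-1` U.
Proof.
elim: t U => [x|n o f IH] U nU.
  have := @ciota x U nU; rewrite nbhsE => -[V [oV Vx] VU].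
  exists [set s | exists2 y, V y & s = Var y]; first by exists V.
  by move=> s [y Vy ->]; exact: VU.
have cq := hev.2 n (o, fun i => E (f i)).
have := cq _ nU; case=> -[W0 G] /= [nW nG] WG.
have [U' [nU' U'G]] := ptws_fin_nbhs nG.
have /choice [Bs HBs] : forall i, exists N, term_box (f i) N /\ N `<=` E @^-1` U' i.
  by move=> i; have [N ? ?] := IH i _ (nU' i); exists N.
move: nW; rewrite nbhsE => -[W [oW Wo] WW0].
exists [set s | exists o2 g, [/\ s = Op n o2 g, W o2 & forall i, Bs i (g i)]].
  by exists W, Bs; split => // i; case: (HBs i).
move=> s0 Hs; case: Hs => o2 [g [-> Wo2 Hg]] /=.
apply: (WG (o2, fun i => E (g i))); split => /=; first exact: WW0.
by apply: U'G => i; case: (HBs i) => _; apply; apply: Hg.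
Qed.

Lemma eval_open (U : set F) : open U -> term_open (E @^-1` U).
Proof.
move=> oU t Ut; apply: eval_box; exact: open_nbhs_nbhs.
Qed.

Lemma eval_clopen (K : set F) : clopen K -> term_clopen (E @^-1` K).
Proof.
case=> oK cK; split; first exact: eval_open.
rewrite preimage_setC; apply: eval_open; exact: closed_openC.
Qed.

Lemma clopen_box n (y : Omega n * {ptws 'I_n -> F}) (Q : set (Omega n * {ptws 'I_n -> F})) :
  nbhs y Q -> exists W (U : 'I_n -> set F), [/\ clopen W, (forall i, clopen (U i)),
    W y.1, (forall i, U i (y.2 i)) &
    (forall p, W p.1 -> (forall i, U i (p.2 i)) -> Q p)].
Proof.
case=> -[A G] /= [nA nG] AG.
have [U' [nU' U'G]] := ptws_fin_nbhs nG.
have [_ _ zO] := hOm n; have [_ _ zF] := hev.1.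
have [W [cW Wy WA]] := zO _ _ nA.
have /choice [U HU] : forall i, exists V, [/\ clopen V, V (y.2 i) & V `<=` U' i].
  by move=> i; exact: zF _ _ (nU' i).
exists W, U; split => //.
- by move=> i; case: (HU i).
- by move=> i; case: (HU i).
- move=> p Wp Up; apply: (AG p); split; first exact: WA.
  by apply: U'G => i; case: (HU i) => _ _; apply; exact: Up.
Qed.

Lemma star_B0 : cond_star [set L | exists2 K : set F, clopen K & L = E @^-1` K].
Proof.
move=> n L [K cK ->].
pose q := fun p : Omega n * {ptws 'I_n -> F} => evF n p.1 p.2.
have cq : continuous q := hev.2 n.
have cPS : clopen (q @^-1` K) := preimage_clopen cK cq.
have hb : forall y : Omega n * {ptws 'I_n -> F},
  exists WU : set (Omega n) * ('I_n -> set F), [/\ clopen WU.1, (forall i, clopen (WU.2 i)),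
    WU.1 y.1, (forall i, WU.2 i (y.2 i)) &
    ((forall p, WU.1 p.1 -> (forall i, WU.2 i (p.2 i)) -> K (q p)) \/
     (forall p, WU.1 p.1 -> (forall i, WU.2 i (p.2 i)) -> ~ K (q p)))].
  move=> y; case: cPS => oPS clPS.
  have [Ky|nKy] := pselect (K (q y)).
    have [W [U [? ? ? ? H]]] := clopen_box _ _ _ (open_nbhs_nbhs (conj oPS Ky)).
    by exists (W, U); split => //; left; exact: H.
  have oC : open (~` (q @^-1` K)) by exact: closed_openC.
  have [W [U [? ? ? ? H]]] := clopen_box _ _ _ (open_nbhs_nbhs (conj oC nKy)).
  by exists (W, U); split => //; right; exact: H.
have /choice [WU HWU] := hb.
pose box y := [set p : Omega n * {ptws 'I_n -> F} | (WU y).1 p.1 /\ forall i, (WU y).2 i (p.2 i)].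
have nbox : forall y, nbhs y (box y).
  move=> y; case: (HWU y) => cW cU Wy Uy _.
  exists ((WU y).1, [set g : {ptws 'I_n -> F} | forall i, (WU y).2 i (g i)]) => /=.
    split; first exact: open_nbhs_nbhs (conj cW.1 Wy).
    have Hf : \forall g \near (y.2 : {ptws 'I_n -> F}), forall i, (WU y).2 i (g i).
      apply: nbhs_forall_fin => i.
      apply: (@proj_continuous _ (fun=> F) i y.2).
      exact: open_nbhs_nbhs (conj (cU i).1 (Uy i)).
    exact: Hf.
  by move=> p [].
have cY : compact [set: Omega n * {ptws 'I_n -> F}].
  rewrite -setXTT; apply: compact_setX; first by case: (hOm n).
  have cF : compact [set: F] by case: hev.1.
  have := @tychonoff _ (fun _ : 'I_n => F) (fun _ => setT) (fun=> cF).
  by congr (compact _); rewrite eqEsubset.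
have {}cY := compact_cover_np cY.
have cov : [set: Omega n * {ptws 'I_n -> F}] `<=` cover [set: Omega n * {ptws 'I_n -> F}] (fun y => interior (box y)).
  by move=> y _; exists y => //; exact: nbox y.
have [D' _ HD'] := cY _ _ _ (fun _ _ => @open_interior _ _) cov.
pose good y := forall p, (WU y).1 p.1 -> (forall i, (WU y).2 i (p.2 i)) -> K (q p).
pose R y := [set p : Omega n * ('I_n -> T) | (WU y).1 p.1 /\ forall i, (E @^-1` ((WU y).2 i)) (p.2 i)].
have -> : (fun p : Omega n * ('I_n -> T) => term_ev p.1 p.2) @^-1` (E @^-1` K) =
    [set p | exists y, [/\ y \in (D' : seq _), good y & R y p]].
  apply/seteqP; split => p /=.
    move=> Kp.
    have [y Dy iy] := HD' (p.1, fun i => E (p.2 i)) Logic.I.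
    have by1 := nbhs_singleton iy.
    exists y; split => //.
    case: (HWU y) => _ _ _ _ [//|Hbad]; exfalso.
    by case: by1 => b1 b2; apply: (Hbad _ b1 b2).
  by case=> y [_ gy [R1 R2]]; apply: (gy (p.1, fun i => E (p.2 i))).
apply: bool_gen_fin => y gy.
case: (HWU y) => cW cU _ _ _.
exists (WU y).1, (fun i => E @^-1` (WU y).2 i); split => //.
by move=> i; exists ((WU y).2 i).
Qed.

Lemma maximal (B : set (set T)) : clopen_bool_subalg B -> cond_star B ->
  B `<=` [set L | exists2 K : set F, clopen K & L = E @^-1` K].
Proof.
move=> [[BT BC BU] Bcl] Bstar.
pose phi : T -> PS T := fun t L => `[< B L /\ L t >].
have gen_h : forall n (S : set (Omega n * ('I_n -> T))),
  bool_gen [set R | exists (K : set (Omega n)) (Ls : 'I_n -> set T),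
          [/\ clopen K, (forall i, B (Ls i)) &
              R = [set p | K p.1 /\ forall i, Ls i (p.2 i)]]] S ->
  exists h : Omega n * {ptws 'I_n -> PS T} -> bool,
    lc h /\ forall o ts, h (o, fun i => phi (ts i)) = `[< S (o, ts) >].
  move=> n S HS.
  apply: (HS [set S0 | exists h : Omega n * {ptws 'I_n -> PS T} -> bool,
    lc h /\ forall o ts, h (o, fun i => phi (ts i)) = `[< S0 (o, ts) >]]).
    split.
    - exists (fun _ => true); split; first exact: lc_cst.
      by move=> o ts; rewrite asboolT.
    - move=> S0 [h [lh Hh]]; exists (fun y => ~~ h y); split; first exact: lc_neg.
      by move=> o ts; rewrite Hh -asbool_neg.
    - move=> S0 S1 [h [lh Hh]] [h' [lh' Hh']]; exists (fun y => h y || h' y).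
      split; first exact: lc_or.
      by move=> o ts; rewrite Hh Hh' -asbool_or.
  move=> R [K [Ls [cK BLs ->]]].
  exists (fun y => `[< K y.1 >] && [forall i, y.2 i (Ls i)]); split.
    apply: lc_and.
      have c1 : continuous (fun y : Omega n * {ptws 'I_n -> PS T} => y.1).
        by move=> y; exact: cvg_fst.
      exact: (lc_comp c1 (lc_clopen cK)).
    apply: lc_forall => i.
    have c2 : continuous (fun y : Omega n * {ptws 'I_n -> PS T} => y.2 i).
      move=> y Q nQ.
      have n2 := @proj_continuous _ (fun=> PS T) i y.2 Q nQ.
      exists (setT, [set g : {ptws 'I_n -> PS T} | Q (g i)]) => //=.
        by split => //; exact: filterT.
      by move=> p [].
    exact: (lc_comp c2 (cont_lc (@PS_proj_cont _ (Ls i)))).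
  move=> o ts /=; rewrite asbool_and; congr andb.
  apply/forallP/asboolP => [H i|H i].
    by have /asboolP [] := H i.
  by apply/asboolP; split; [exact: BLs|exact: H].
have hex : forall n, exists H : set T -> (Omega n * {ptws 'I_n -> PS T} -> bool),
    forall L, lc (H L) /\
      forall o ts, H L (o, fun i => phi (ts i)) = `[< B L /\ L (Op n o ts) >].
  move=> n.
  suff: forall L, exists h : Omega n * {ptws 'I_n -> PS T} -> bool, lc h /\
      forall o ts, h (o, fun i => phi (ts i)) = `[< B L /\ L (Op n o ts) >].
    by move=> /choice [f Hf]; exists f.
  move=> L; have [BL|nBL] := pselect (B L).
    have [h [lh Hh]] := gen_h n _ (Bstar n L BL).
    exists h; split => // o ts; rewrite Hh; apply: asbool_equiv_eq.
    by split => [H|[]] //.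
  exists (fun _ => false); split; first exact: lc_cst.
  by move=> o ts; rewrite asboolF // => -[].
pose H n := proj1_sig (cid (hex n)).
have HH n : forall L, lc (H n L) /\
      forall o ts, H n L (o, fun i => phi (ts i)) = `[< B L /\ L (Op n o ts) >].
  exact: (proj2_sig (cid (hex n))).
pose evP : op_type Omega (PS T) := fun n o a L => H n L (o, a).
have sP : stone_alg evP.
  split; first exact: PS_stone.
  move=> n; apply: PS_cont => L.
  have -> : (fun y : Omega n * {ptws 'I_n -> PS T} => evP n y.1 y.2 L) = H n L.
    by apply/funext => -[].
  exact: (HH n L).1.
pose f := fun x => phi (Var x).
have cf : continuous f.
  apply: PS_cont => L.
  have [BL|nBL] := pselect (B L); last first.
    have -> : (fun x => f x L) = (fun _ => false).
      by apply/funext => x; rewrite /f /phi asboolF // => -[].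
    exact: lc_cst.
  have [tL tLc] := Bcl L BL.
  move=> x; have [Lx|nLx] := pselect (L (Var x)).
    have [N [V [oV Vx ->]] NL] := tL _ Lx.
    apply: (@filterS _ _ _ V); last exact: open_nbhs_nbhs.
    move=> z Vz /=; rewrite /f /phi !asboolT //; split => //; apply: NL; by exists z.
  have [N [V [oV Vx ->]] NL] := tLc _ nLx.
  apply: (@filterS _ _ _ V); last exact: open_nbhs_nbhs.
  move=> z Vz /=; rewrite /f /phi (@asboolF (B L /\ L (Var x))); last by case.
  rewrite asboolF // => -[_ Lz].
  by apply: (NL (Var z)) Lz; exists z.
have [_ _ _ hU] := hF.
have [g [[cg hg gi] _]] := hU _ evP sP f cf.
have gE : forall t, g (E t) = phi t.
  elim => [x|n o ts IH] /=; first by rewrite gi.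
  rewrite hg.
  have -> : (g \o (fun i => E (ts i))) = (fun i => phi (ts i)).
    by apply/funext => i /=; exact: IH.
  apply/funext => L; rewrite /evP; exact: ((HH n L).2 o ts).
move=> L BL; exists (g @^-1` [set u : PS T | u L]).
  apply: preimage_clopen => //.
  apply: (@preimage_clopen _ _ (fun u : PS T => u L) [set true]).
    by split; [exact: discrete_open|exact: discrete_closed].
  exact: (@PS_proj_cont _ L).
apply/seteqP; split => t /=.
  by move=> Lt; rewrite gE /phi; apply/asboolP.
by rewrite gE /phi => /asboolP [].
Qed.
End Main.

Theorem corollary5p9 (Omega : nat -> topologicalType) (X : topologicalType)
    (F : topologicalType) (evF : op_type Omega F) (iota : X -> F) :
  stone_signature Omega ->
  is_free_stone_alg evF iota ->
  let B0 : set (set (term Omega X)) :=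
    [set L | exists2 K : set F, clopen K & L = term_eval evF iota @^-1` K] in
  [/\ clopen_bool_subalg B0, cond_star B0 &
      forall B : set (set (term Omega X)),
        clopen_bool_subalg B -> cond_star B -> B `<=` B0].
Proof.
move=> hOm hF B0.
have [hev ciota _ _] := hF.
split.
- split.
  + split.
    * by exists setT; [exact: clopenT | rewrite preimage_setT].
    * move=> S [K cK ->]; exists (~` K); last by rewrite preimage_setC.
      by case: cK => oK cK; split; [exact: closed_openC | exact: open_closedC].
    * move=> S S' [K cK ->] [K' cK' ->]; exists (K `|` K'); first exact: clopenU.
      by rewrite preimage_setU.
  + by move=> S [K cK ->]; exact: eval_clopen.
- exact: star_B0.
- by move=> B hB hS; exact: maximal.
Qed.
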